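(* Let $G$ be a torsion-free group, $\alpha$ a zero divisor in $\mathbb{F}_2[G]$ with $|supp(\alpha)|=4$ and $|S_\alpha|=10$, and $\beta$ a mate of $\alpha$. Then every vertex of $\mathcal{Z}(\alpha,\beta)$ has degree in $\{3,4,5,6,7,8,10\}$.
   Context: $supp(\gamma)=\{x\in G:\gamma_x\ne0\}$; $S_\alpha=\{h^{-1}h':h\ne h',\ h,h'\in supp(\alpha)\}$. A mate of $\alpha$ is a non-zero $\beta$ with $\alpha\beta=0$ of minimal support size among all non-zero $\beta'$ with $\alpha\beta'=0$. $Z(\alpha,\beta)$ is the multigraph with vertex set $supp(\beta)$ whose edges are the sets $\{(h,h',g,g'),(h',h,g',g)\}$ with $h,h'\in supp(\alpha)$, $g,g'\in supp(\beta)$, $g\ne g'$, $hg=h'g'$, each joining $g$ and $g'$. $\mathcal{Z}(\alpha,\beta)$ is the simple graph obtained from $Z(\alpha,\beta)$ by replacing each set of multiple edges between two vertices by a single edge (so $g\sim g'$ in $\mathcal{Z}$ iff they are joined by at least one edge in $Z$). *)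

(* Defs.v *)
From HB Require Import structures.
From mathcomp Require Import all_boot finmap.

Set Implicit Arguments.
Unset Strict Implicit.
Unset Printing Implicit Defensive.

Local Open Scope fset_scope.

Section GroupAlgebraF2.

Variable G : groupType.

Definition torsion_free : Prop :=
  forall (x : G) (n : nat), (0 < n)%N -> (x ^+ n)%g = 1%g -> x = 1%g.

(* An element of F_2[G] is identified with its support, a finite subset of
   G (the coefficient of x is 1 iff x is in the set).  Hence
   supp(gamma) = gamma and "gamma <> 0" is "gamma != fset0". *)

(* number of pairs (h, g) in a x b with h g = x; the coefficient of x in the
   product a * b in F_2[G] is this number mod 2 *)
Definition conv_count (a b : {fset G}) (x : G) : nat :=
  \sum_(h <- a) \sum_(g <- b) ((h * g)%g == x).

Definition F2mul (a b : {fset G}) : {fset G} :=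
  [fset x in [fset (h * g)%g | h in a, g in b] | odd (conv_count a b x)].

Definition zero_divisor (a : {fset G}) : Prop :=
  a != fset0 /\
  exists b : {fset G}, b != fset0 /\ (F2mul a b = fset0 \/ F2mul b a = fset0).

Definition mate (a b : {fset G}) : Prop :=
  [/\ b != fset0, F2mul a b = fset0 &
      forall b' : {fset G}, b' != fset0 -> F2mul a b' = fset0 ->
        (#|` b| <= #|` b'|)%N].

Definition S_of (a : {fset G}) : {fset G} :=
  [fset (p.1^-1 * p.2)%g | p in [fset q in a `*` a | q.1 != q.2]].

(* adjacency in the simple graph calZ(alpha, beta) (vertex set supp beta):
   g ~ g' iff g <> g' and h g = h' g' for some h, h' in supp alpha *)
Definition zadj (a : {fset G}) (g g' : G) : bool :=
  (g != g') && has (fun h => has (fun h' => (h * g)%g == (h' * g')%g) a) a.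

Definition zdeg (a b : {fset G}) (g : G) : nat :=
  #|` [fset g' in b | zadj a g g'] |.

End GroupAlgebraF2.

(* Main.v *)
Require Import Defs.
From HB Require Import structures.
From mathcomp Require Import all_boot finmap.
From mathcomp Require Import zify.
Set Implicit Arguments.
Unset Strict Implicit.
Unset Printing Implicit Defensive.
Local Open Scope fset_scope.

Section Helpers.
Variable G : groupType.
Local Open Scope group_scope.

Lemma fin_orbit (P : pred G) (X : {fset G}) (u y0 : G) :
  (forall y, P y -> y \in X) -> (forall y, P y -> P (u * y)) -> P y0 ->
  exists2 n, (0 < n)%N & u ^+ n = 1.
Proof.
move=> PX Pu Py0.
have Hk : forall k, P (u ^+ k * y0).
  elim=> [|k IH]; first by rewrite expg0 mul1g.
  by rewrite expgS -mulgA; apply: Pu.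
set s := [seq u ^+ k * y0 | k <- iota 0 (#|` X|).+1].
have nu : ~~ uniq s.
  apply/negP => us.
  have : (size s <= size (enum_fset X))%N.
    apply: uniq_leq_size us _.
    by move=> z /mapP [k _ ->]; apply: PX.
  by rewrite size_map size_iota ltnn.
case/(uniqPn y0): nu => [i [j [ij js E]]].
move: E.
have is_ : (i < size s)%N by apply: ltn_trans ij js.
rewrite size_map size_iota in js is_.
rewrite !(nth_map 0%N) ?size_iota // !nth_iota // !add0n => /mulIg E.
exists (j - i)%N; first by rewrite subn_gt0.
apply: (@mulgI _ (u ^+ i)); rewrite mulg1 -expgnDr subnKC ?E //.
exact: ltnW.
Qed.


Lemma sum_bool_count (T : eqType) (s : seq T) (p : pred T) :
  (\sum_(i <- s) (p i : nat))%N = count p s.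
Proof. by elim: s => [|y s IH]; rewrite ?big_nil ?big_cons ?IH. Qed.

Lemma card_sep (A : {fset G}) (p : pred G) :
  #|` [fset h in A | p h]| = count p A.
Proof. by rewrite card_fset_sum1 -big_fset_condE sum1_count. Qed.

Lemma conv_countE (a b : {fset G}) x :
  conv_count a b x = #|` [fset h in a | h^-1 * x \in b]|.
Proof.
rewrite /conv_count card_sep -sum_bool_count.
apply: eq_bigr => h _.
rewrite sum_bool_count -count_uniq_mem ?fset_uniq //.
apply: eq_count => g /=.
apply/eqP/eqP => [<-|->]; [by rewrite mulKg | by rewrite mulVKg].
Qed.

Lemma even_conv (a b : {fset G}) x :
  F2mul a b = fset0 -> ~~ odd (conv_count a b x).
Proof.
move=> E; apply/negP => od.
have : x \in F2mul a b.
  rewrite /F2mul !inE od andbT.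
  have : (0 < conv_count a b x)%N by case: (conv_count a b x) od.
  rewrite conv_countE cardfs_gt0 => /fset0Pn [h].
  rewrite !inE => /andP [ha hb].
  apply/imfset2P; exists h => //; exists (h^-1 * x) => //.
  by rewrite mulVKg.
by rewrite E inE.
Qed.


Lemma out_odd (a b : {fset G}) h g : F2mul a b = fset0 -> h \in a -> g \in b ->
  odd #|` [fset h' in a | (h' != h) && (h'^-1 * (h * g) \in b)]|.
Proof.
move=> E ha gb; have := even_conv (h * g) E.
rewrite conv_countE (cardfsD1 h) !inE ha mulKg gb /=.
suff -> : [fset h0 in a | h0^-1 * (h * g) \in b] `\ h =
          [fset h' in a | (h' != h) && (h'^-1 * (h * g) \in b)] by case: odd.
by apply/fsetP => x; rewrite !inE; case: (x == h); case: (x \in a).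
Qed.

Lemma S_ofP (a : {fset G}) v :
  reflect (exists h, exists h', [/\ h \in a, h' \in a, h != h' & v = h^-1 * h'])
          (v \in S_of a).
Proof.
apply: (iffP idP).
  case/imfsetP => p /=; rewrite !inE => /andP [/andP [p1 p2] np] ->.
  by exists p.1, p.2.
case=> h [h' [ha h'a nh ->]]; apply/imfsetP; exists (h, h') => //=.
by rewrite !inE /= ha h'a nh.
Qed.

Lemma zdegE (a b : {fset G}) g :
  zdeg a b g = #|` [fset v in S_of a | v * g \in b]|.
Proof.
rewrite /zdeg.
have -> : [fset g' in b | zadj a g g'] = [fset v * g | v in [fset v in S_of a | v * g \in b]].
  apply/fsetP => g'; rewrite !inE; apply/andP/imfsetP.
    case=> g'b /andP [ngg /hasP [h ha /hasP [h' h'a /eqP E]]].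
    exists (h'^-1 * h).
      rewrite !inE; apply/andP; split.
        apply/S_ofP; exists h', h; split => //.
        by apply: contra_neq ngg => eh; apply: (@mulgI _ h); rewrite E eh.
      by rewrite -mulgA E mulKg.
    by rewrite -mulgA E mulKg.
  case=> v; rewrite !inE => /andP [/S_ofP [h [h' [ha h'a nh ->]]] vb] ->.
  split => //; apply/andP; split.
    apply/eqP => E; move/eqP: nh; apply.
    have E' : h^-1 * h' = 1 by apply: (@mulIg _ g); rewrite mul1g -E.
    by rewrite -(mulVKg h h') E' mulg1.
  apply/hasP; exists h' => //; apply/hasP; exists h => //.
  by rewrite mulgA mulVKg.
rewrite card_in_imfset //= => x y _ _; exact: mulIg.
Qed.


Lemma sum4 (a : {fset G}) (F : G -> nat) x1 x2 x3 x4 :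
  #|` a| = 4%N -> x1 \in a -> x2 \in a -> x3 \in a -> x4 \in a ->
  x1 != x2 -> x1 != x3 -> x1 != x4 -> x2 != x3 -> x2 != x4 -> x3 != x4 ->
  (\sum_(i <- a) F i = F x1 + F x2 + F x3 + F x4)%N.
Proof.
move=> ca i1 i2 i3 i4 n12 n13 n14 n23 n24 n34.
have j2 : x2 \in a `\ x1 by rewrite !in_fsetD1 eq_sym n12.
have j3 : x3 \in a `\ x1 `\ x2 by rewrite !in_fsetD1 eq_sym n23 eq_sym n13.
have j4 : x4 \in a `\ x1 `\ x2 `\ x3 by rewrite !in_fsetD1 eq_sym n34 eq_sym n24 eq_sym n14.
have e0 : a `\ x1 `\ x2 `\ x3 `\ x4 = fset0.
  apply: cardfs0_eq.
  move: ca; rewrite (cardfsD1 x1) i1 (cardfsD1 x2 (a `\ x1)) j2.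
  rewrite (cardfsD1 x3 (a `\ x1 `\ x2)) j3 (cardfsD1 x4 (a `\ x1 `\ x2 `\ x3)) j4.
  by move=> [].
rewrite (big_fsetD1 x1) // (big_fsetD1 x2) // (big_fsetD1 x3) // (big_fsetD1 x4) //.
by rewrite e0 big_seq_fset0 /= addn0 !addnA.
Qed.

Lemma parity4 (b1 b2 b3 b4 : bool) :
  ~~ odd (b1 + b2 + b3 + b4)%N -> (b1 (+) b2) = (b3 (+) b4).
Proof. by case: b1; case: b2; case: b3; case: b4. Qed.

Lemma no_split (a b : {fset G}) (x1 x2 y1 y2 : G) :
  torsion_free G -> F2mul a b = fset0 -> b != fset0 -> #|` a| = 4%N ->
  x1 \in a -> x2 \in a -> y1 \in a -> y2 \in a ->
  x1 != x2 -> x1 != y1 -> x1 != y2 -> x2 != y1 -> x2 != y2 -> y1 != y2 ->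
  x2^-1 * x1 = y2^-1 * y1 -> False.
Proof.
move=> tf E bn ca i1 i2 i3 i4 n12 n13 n14 n23 n24 n34 et.
set t := x2^-1 * x1.
have ex1 : x1 = x2 * t by rewrite /t mulVKg.
have ey1 : y1 = y2 * t by rewrite /t et mulVKg.
have r1 : forall x, x1^-1 * x = t^-1 * (x2^-1 * x).
  by move=> x; rewrite /t invgM invgK -mulgA mulVKg.
have r2 : forall x, y1^-1 * x = t^-1 * (y2^-1 * x).
  by move=> x; rewrite /t et invgM invgK -mulgA mulVKg.
pose F y := (y \in b) (+) (t^-1 * y \in b).
have HF : forall x, F (x2^-1 * x) = F (y2^-1 * x).
  move=> x; have := even_conv x E.
  rewrite conv_countE card_sep -sum_bool_count.
  rewrite (sum4 (fun h => (h^-1 * x \in b) : nat) ca i2 i1 i4 i3); try by rewrite // eq_sym.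
  rewrite r1 r2 => /parity4.
  by rewrite /F.
have HF' : forall y, F y -> F ((y2^-1 * x2) * y).
  by move=> y Fy; rewrite -mulgA -HF mulKg.
have Fn : forall y, ~~ F y.
  move=> y0; apply/negP => Fy0.
  have PX : forall y, F y -> y \in b `|` [fset t * z | z in b].
    move=> y Fy; rewrite in_fsetU; apply/orP; case yb: (y \in b); [by left | right].
    move: Fy; rewrite /F yb /= => tb; apply/imfsetP; exists (t^-1 * y) => //=.
    by rewrite mulVKg.
  have [n n0 un] := fin_orbit PX HF' Fy0.
  have u1 := tf _ _ n0 un.
  by move/eqP: n24; apply; rewrite -(mulVKg y2 x2) u1 mulg1.
have Hb : forall y, y \in b -> t^-1 * y \in b.
  move=> y yb; have := Fn y; rewrite /F yb /=; by case: (t^-1 * y \in b).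
case/fset0Pn: bn => y0 y0b.
have [n n0 un] := @fin_orbit (mem b) b t^-1 y0 (fun y h => h) Hb y0b.
have u1 := tf _ _ n0 un.
move/eqP: n12; apply; rewrite ex1.
by rewrite -(invgK t) u1 invg1 mulg1.
Qed.


Lemma not9 (alpha beta : {fset G}) g :
  F2mul alpha beta = fset0 -> #|` alpha| = 4%N -> #|` S_of alpha| = 10%N ->
  g \in beta -> #|` [fset v in S_of alpha | v * g \in beta]| != 9%N.
Proof.
move=> E ca cS gb; apply/eqP => c9.
set P := [fset v in S_of alpha | v * g \in beta] in c9.
have PS : P `<=` S_of alpha by apply: fset_sub.
have : #|` S_of alpha `\` P| == 1%N by rewrite cardfsDS // cS c9.
case/cardfs1P => v0 e0.
have : v0 \in S_of alpha `\` P by rewrite e0 inE.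
rewrite in_fsetD => /andP [v0P v0S].
have HS : forall v, v \in S_of alpha -> v != v0 -> v * g \in beta.
  move=> v vS nv; apply/negPn/negP => vb.
  have : v \in S_of alpha `\` P by rewrite in_fsetD vS andbT !inE vS /= vb.
  by rewrite e0 inE => /eqP ev; move/eqP: nv.
have v0b : v0 * g \notin beta by move: v0P; rewrite !inE v0S.
case/S_ofP: v0S => h1 [h2 [h1a h2a n12 ev0]].
have := out_odd E h2a gb.
have -> : [fset h' in alpha | (h' != h2) && (h'^-1 * (h2 * g) \in beta)] =
          alpha `\ h2 `\ h1.
  apply/fsetP => h'; rewrite !in_fsetD1 !inE.
  case: (eqVneq h' h1) => [->|nh1].
    by rewrite mulgA -ev0 (negbTE v0b) !andbF.
  case: (eqVneq h' h2) => [->|nh2]; first by rewrite andbF.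
  case h'a : (h' \in alpha) => //=.
  rewrite mulgA; apply: HS.
    by apply/S_ofP; exists h', h2; split.
  rewrite ev0; apply: contra_neq nh1 => /mulIg /invg_inj //.
move: ca; rewrite (cardfsD1 h2) h2a (cardfsD1 h1 (alpha `\ h2)) in_fsetD1 n12 h1a.
by move=> /= /eqP; rewrite !add1n !eqSS => /eqP ->.
Qed.


Lemma count_img (K : choiceType) (phi : K -> G) (D X : {fset K}) :
  X `<=` D -> (#|` [fset phi x | x in D]| + #|` X| <= #|` [fset phi x | x in X]| + #|` D|)%N.
Proof.
move=> XD.
have eD : D = X `|` (D `\` X).
  apply/fsetP => x; rewrite in_fsetU in_fsetD.
  case xX : (x \in X) => //=; by rewrite (fsubsetP XD).
have h1 := (leq_card_fsetU [fset phi x | x in X] [fset phi x | x in D `\` X]).1.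
have h2 : (#|` [fset phi x | x in D `\` X]| <= #|` D `\` X|)%N by apply: leq_imfset_card.
have h3 := cardfsDS XD.
have h4 := fsubset_leq_card XD.
have h0 : [fset phi x | x in D] = [fset phi x | x in X] `|` [fset phi x | x in D `\` X].
  apply/fsetP => y; rewrite in_fsetU; apply/imfsetP/orP.
    case=> x xD ->; case xX : (x \in X); [left | right]; apply/imfsetP; exists x => //.
    by rewrite in_fsetD xX.
  by case=> /imfsetP [x xX ->]; exists x => //; [apply: (fsubsetP XD) | move: xX; rewrite in_fsetD => /andP []].
rewrite h0.
lia.
Qed.


Lemma cardD12 (a : {fset G}) :
  #|` a| = 4%N -> (#|` [fset q in a `*` a | q.1 != q.2]| <= 12)%N.
Proof.
case E : (enum_fset a) => [|a1 [|a2 [|a3 [|a4 [|? ?]]]]] // _.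
have mem_a : forall x, (x \in a) = (x \in [:: a1; a2; a3; a4]) by move=> x; rewrite -E.
set s := [:: (a1, a2); (a1, a3); (a1, a4); (a2, a1); (a2, a3); (a2, a4);
             (a3, a1); (a3, a2); (a3, a4); (a4, a1); (a4, a2); (a4, a3)].
apply: (@leq_trans #|` [fset z in s]|).
  apply: fsubset_leq_card; apply/fsubsetP => [[x y]].
  rewrite !inE /= !mem_a !inE => /andP [/andP [hx hy] nxy].
  move: hx hy nxy.
  by case/or4P => /eqP ->; case/or4P => /eqP ->; rewrite ?eqxx // => _; rewrite ?orbT.
by rewrite card_fseq (leq_trans (size_undup _)).
Qed.


Lemma ge3 (alpha beta : {fset G}) g :
  torsion_free G -> F2mul alpha beta = fset0 -> beta != fset0 ->
  #|` alpha| = 4%N -> #|` S_of alpha| = 10%N -> g \in beta ->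
  (3 <= #|` [fset v in S_of alpha | (v * g)%g \in beta]|)%N.
Proof.
move=> tf E bn ca cS gb; rewrite leqNgt; apply/negP => lt3.
set P := [fset v in S_of alpha | v * g \in beta] in lt3.
have PS : forall v, v \in P -> v \in S_of alpha by move=> v; rewrite !inE => /andP [].
have S1 : forall v, v \in S_of alpha -> v != 1.
  move=> v /S_ofP [h [h' [_ _ nh ->]]]; apply: contra_neq nh => e.
  by rewrite -(mulVKg h h') e mulg1.
pose O h := [fset h' in alpha | (h' != h) && (h'^-1 * (h * g) \in beta)].
have Ocard : forall h, h \in alpha -> #|` O h| = 1%N.
  move=> h ha; have od := out_odd E ha gb.
  have : (#|` O h| <= #|` P|)%N.
    have -> : #|` O h| = #|` [fset h'^-1 * h | h' in O h]|.
      rewrite (card_imfset _ (f := fun h' => h'^-1 * h)) //; last by move=> x y /mulIg /invg_inj.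
    apply: fsubset_leq_card; apply/fsubsetP => v /imfsetP [h' h'O ->].
    move: h'O; rewrite !inE => /andP [h'a /andP [nh hb]].
    rewrite -mulgA hb andbT; apply/S_ofP; exists h', h; split => //.
  move: od; rewrite /O; move: (#|` _|) => n.
  by case: n => [|[|[|n]]] //= _ /leq_trans /(_ lt3).
pose f h := head h (enum_fset (O h)).
have fO : forall h, h \in alpha -> f h \in O h.
  move=> h ha; have := Ocard h ha; rewrite /f.
  case es : (enum_fset (O h)) => [|c s] //= _.
  by rewrite -[c \in O h]/(c \in enum_fset (O h)) es inE eqxx.
have fuq : forall h h', h \in alpha -> h' \in O h -> h' = f h.
  move=> h h' ha h'O; have /eqP/cardfs1P [c ec] := Ocard h ha.
  have := fO h ha; rewrite ec inE => /eqP ->.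
  by move: h'O; rewrite ec inE => /eqP.
have fa : forall h, h \in alpha -> [/\ f h \in alpha, f h != h & (f h)^-1 * h \in P].
  move=> h ha; have := fO h ha; rewrite !inE => /andP [fha /andP [nf fb]].
  split => //; rewrite -mulgA fb andbT; apply/S_ofP; exists (f h), h; split => //.
have funiq : forall h h', h \in alpha -> h' \in alpha -> h' != h ->
    h'^-1 * h \in P -> h' = f h.
  move=> h h' ha h'a nh; rewrite !inE => /andP [_ hb]; apply: fuq => //.
  by rewrite !inE h'a nh mulgA.
have fi : forall h, h \in alpha -> f h \in alpha.
  by move=> h /fa [].
have fn : forall h, h \in alpha -> f h != h.
  by move=> h /fa [].
have fP : forall h, h \in alpha -> (f h)^-1 * h \in P.
  by move=> h /fa [].
case hP : (has (fun x => x^-1 \in P) P).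
  case/hasP: hP => x xP xiP.
  have nx : x != x^-1.
    apply/negP => /eqP ex; move: (S1 x (PS x xP)); apply/negP; apply/negPn/eqP.
    apply: (tf x 2) => //; rewrite expg2 {1}ex; exact: mulVg.
  have Pcl : forall y, y \in P -> y = x \/ y = x^-1.
    move=> y yP; case: (eqVneq y x) => [->|nyx]; first by left.
    case: (eqVneq y x^-1) => [->|nyxi]; first by right.
    have : (#|` (x |` [fset x^-1; y])| <= #|` P|)%N.
      apply: fsubset_leq_card; apply/fsubsetP => z zin; rewrite !inE in zin.
      by case/orP: zin => [/eqP->//|/orP [/eqP->//|/eqP->//]].
    rewrite cardfsU1 cardfs2 !inE (negbTE nx) (eq_sym x y) (negbTE nyx) (eq_sym x^-1 y) nyxi /=.
    by move/leq_trans/(_ lt3).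
  have Pinv : forall y, y \in P -> y^-1 \in P.
    by move=> y /Pcl [->|->]; rewrite ?invgK.
  have finv : forall h, h \in alpha -> f (f h) = h.
    move=> h ha; apply/esym/funiq => //; first exact: fi.
      by rewrite eq_sym fn.
    have -> : h^-1 * f h = ((f h)^-1 * h)^-1 by rewrite invgM invgK.
    by apply: Pinv; apply: fP.
  have : alpha != fset0 by rewrite -cardfs_gt0 ca.
  case/fset0Pn => h1 h1a.
  have h2a := fi h1 h1a; have n21 := fn h1 h1a.
  have : alpha `\ h1 `\ f h1 != fset0.
    rewrite -cardfs_gt0; move: ca; rewrite (cardfsD1 h1) h1a (cardfsD1 (f h1) (alpha `\ h1)).
    by rewrite in_fsetD1 n21 h2a /= => /eqP; rewrite !add1n !eqSS => /eqP ->.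
  case/fset0Pn => h3; rewrite !in_fsetD1 => /and3P [n32 n31 h3a].
  have h4a := fi h3 h3a; have n43 := fn h3 h3a.
  have n41 : f h3 != h1.
    apply: contra_neq n32 => e; by rewrite -e finv.
  have n42 : f h3 != f h1.
    apply: contra_neq n31 => e; by rewrite -(finv h3 h3a) e finv.
  have [e|e] : (f h3)^-1 * h3 = (f h1)^-1 * h1 \/ (f h3)^-1 * h3 = ((f h1)^-1 * h1)^-1.
  - by case: (Pcl _ (fP h1 h1a)) => ->; case: (Pcl _ (fP h3 h3a)) => ->; rewrite ?invgK; auto.
  - apply: (@no_split alpha beta h1 (f h1) h3 (f h3)) => //; try by rewrite eq_sym.
  - rewrite invgM invgK in e.
    apply: (@no_split alpha beta (f h1) h1 h3 (f h3)) => //; try by rewrite eq_sym.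
have /hasPn hPn := negbT hP.
pose phi (q : G * G) := q.1^-1 * q.2.
pose D := [fset q in alpha `*` alpha | q.1 != q.2].
pose Es := [fset (f h, h) | h in alpha].
pose Rs := [fset (h, f h) | h in alpha].
have cE : #|` Es| = 4%N.
  by rewrite (card_imfset _ (f := fun h => (f h, h))) //; move=> x y [].
have cR : #|` Rs| = 4%N.
  by rewrite (card_imfset _ (f := fun h => (h, f h))) //; move=> x y [].
have dis : Es `&` Rs = fset0.
  apply/fsetP => q; rewrite in_fsetI in_fset0; apply/negP.
  case/andP => /imfsetP [h ha ->] /imfsetP [h' h'a [e1 e2]].
  have y1 := fP h ha; rewrite e1 e2 in y1.
  have y2 := fP h' h'a.
  move: (hPn _ y2); rewrite invgM invgK => /negP; apply.
  exact: y1.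
have cX : #|` Es `|` Rs| = 8%N by rewrite cardfsU dis cardfs0 cE cR.
have XD : Es `|` Rs `<=` D.
  apply/fsubsetP => q; rewrite in_fsetU => /orP [] /imfsetP [h ha ->];
    rewrite !inE /= ha fi //= ?fn // eq_sym fn //.
have img : [fset phi q | q in Es `|` Rs] `<=` P `|` [fset y^-1 | y in P].
  apply/fsubsetP => v /imfsetP [q]; rewrite in_fsetU => /orP [] /imfsetP [h ha ->] ->;
    rewrite in_fsetU /phi /=.
    by rewrite fP.
  apply/orP; right; apply/imfsetP; exists ((f h)^-1 * h); first exact: fP.
  by rewrite invgM invgK.
have c1 := fsubset_leq_card img.
have c2 := (leq_card_fsetU P [fset y^-1 | y in P]).1.
have c3 : (#|` [fset y^-1 | y in P]| <= #|` P|)%N by apply: leq_imfset_card.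
have c4 := count_img phi XD.
have c5 := cardD12 ca.
have eS : S_of alpha = [fset phi x | x in D] by [].
rewrite -eS cS cX in c4.
rewrite -/D in c5.
have lt3' : (#|` P| <= 2)%N by [].
have c6 := leq_trans c1 (leq_trans c2 (leq_add lt3' (leq_trans c3 lt3'))).
have := leq_trans c4 (leq_add c6 c5). by [].
Qed.

End Helpers.

Theorem mainTheorem19 (G : groupType) (alpha beta : {fset G}) :
  torsion_free G ->
  zero_divisor alpha ->
  #|` alpha| = 4%N ->
  #|` S_of alpha| = 10%N ->
  mate alpha beta ->
  forall g : G, g \in beta ->
    zdeg alpha beta g \in [:: 3; 4; 5; 6; 7; 8; 10]%N.
Proof.
move=> tf _ ca cS [bn E _] g gb.
rewrite zdegE.
have h3 := ge3 tf E bn ca cS gb.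
have h9 := not9 E ca cS gb.
have h10 : (#|` [fset v in S_of alpha | (v * g)%g \in beta]| <= 10)%N.
  by rewrite -cS; apply: fsubset_leq_card; apply: fset_sub.
move: h3 h9 h10; move: (#|` _|) => n.
by do 11! (case: n => [|n] //).
Qed.
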